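(* Let $(X,d)$ be a pointed metric space and let $((x_i,y_i))_{i\in I}$ be a Lipschitz interpolating family in $\widetilde X$ for $\mathrm{Lip}_0(X)$. Then there exists $\delta>0$ (depending on the family) such that every family $((u_i,v_i))_{i\in I}$ in $\widetilde X$ satisfying $\rho((x_i,y_i),(u_i,v_i))<\delta$ for all $i\in I$ is also Lipschitz interpolating for $\mathrm{Lip}_0(X)$.
   Context: All spaces are real. $(X,d)$ is a metric space with base point $0$, $\widetilde{X}=\{(x,y)\in X\times X: x\neq y\}$. $\mathrm{Lip}_0(X)$ is the Banach space of Lipschitz $f:X\to\mathbb{R}$ with $f(0)=0$, normed by $\|f\|=\sup_{(x,y)\in\widetilde X}|f(x)-f(y)|/d(x,y)$. For $x\in X$, $\delta_x\in\mathrm{Lip}_0(X)^*$ is $\delta_x(f)=f(x)$; for $(x,y)\in\widetilde X$, $m_{x,y}=(\delta_x-\delta_y)/d(x,y)\in\mathrm{Lip}_0(X)^*$. The Lipschitz-molecular metric on $\widetilde X$ is $\rho((x,y),(u,v))=\|m_{x,y}-m_{u,v}\|$ (dual norm). For a family $((x_i,y_i))_{i\in I}$ in $\widetilde X$, its Lipschitz interpolating operator is $T:\mathrm{Lip}_0(X)\to\ell_\infty(I)$, $T(f)=\big((f(x_i)-f(y_i))/d(x_i,y_i)\big)_{i\in I}$, and the family is Lipschitz interpolating for $\mathrm{Lip}_0(X)$ if $T$ is surjective. *)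

(* Defs.v *)
From mathcomp Require Import all_boot all_order all_algebra.
From mathcomp Require Import all_classical all_reals.
Set Implicit Arguments. Unset Strict Implicit. Unset Printing Implicit Defensive.
Import Order.TTheory GRing.Theory Num.Theory.
Local Open Scope ring_scope.
Local Open Scope classical_set_scope.

Section Lip.
Variable R : realType.

Definition is_metric (X : Type) (d : X -> X -> R) : Prop :=
  [/\ forall x y, 0 <= d x y,
      forall x y, d x y = 0 <-> x = y,
      forall x y, d x y = d y x &
      forall x y z, d x z <= d x y + d y z].

Variables (X : Type) (d : X -> X -> R) (x0 : X).

Definition is_lip0 (f : X -> R) : Prop :=
  f x0 = 0 /\ exists L : R, forall x y, `|f x - f y| <= L * d x y.

Definition lip0_ball (f : X -> R) : Prop :=
  is_lip0 f /\ forall x y, x <> y -> `|f x - f y| / d x y <= 1.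

Definition molecule (p : X * X) (f : X -> R) : R :=
  (f p.1 - f p.2) / d p.1 p.2.

Definition rho (p q : X * X) : R :=
  sup [set r : R | exists f, lip0_ball f /\ r = `|molecule p f - molecule q f| ].

(* the family (p i)_{i in I} (in X~) is Lipschitz interpolating for Lip_0(X):
   T : Lip_0(X) -> l_oo(I) is surjective *)
Definition lip_interpolating (I : Type) (p : I -> X * X) : Prop :=
  forall a : I -> R, (exists M : R, forall i, `|a i| <= M) ->
    exists f, is_lip0 f /\ forall i, molecule (p i) f = a i.

End Lip.

(* Main.v *)
Require Import Defs.
From mathcomp Require Import all_boot all_order all_algebra.
From mathcomp Require Import all_classical all_reals.
From mathcomp Require Import ring lra.
Import Order.TTheory GRing.Theory Num.Theory.
Local Open Scope ring_scope.
Local Open Scope classical_set_scope.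
Set Implicit Arguments. Unset Strict Implicit.
Section S.
Variable R : realType.

Lemma mono_nat (t : nat -> R) : (forall n, t n <= t n.+1) ->
  forall k n, (k <= n)%N -> t k <= t n.
Proof.
move=> H k; elim=> [|n IH]; first by rewrite leqn0 => /eqP ->.
rewrite leq_eqVlt => /orP[/eqP -> //|]; rewrite ltnS => /IH kn.
exact: le_trans kn (H n).
Qed.

Definition slim (s : nat -> R) (c th : R) :=
  sup (range (fun n => s n - c * th ^+ n / (1 - th))).

Lemma slimP (s : nat -> R) (c th : R) : 0 <= c -> 0 < th < 1 ->
  (forall n, `|s n.+1 - s n| <= c * th ^+ n) ->
  forall n, `|slim s c th - s n| <= c * th ^+ n / (1 - th).
Proof.
move=> c0 /andP[th0 th1] H.
have h1 : 0 < 1 - th by rewrite subr_gt0.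
set e := fun n => c * th ^+ n / (1 - th).
have ediff : forall n, e n - e n.+1 = c * th ^+ n.
  move=> n; by rewrite /e exprS; field; rewrite gt_eqF.
set t := fun n => s n - e n.
set u := fun n => s n + e n.
have tinc : forall n, t n <= t n.+1.
  move=> n; rewrite /t; have := H n; rewrite ler_norml => /andP[a b].
  have := ediff n; lra.
have udec : forall n, - u n <= - u n.+1.
  move=> n; rewrite /u; have := H n; rewrite ler_norml => /andP[a b].
  have := ediff n; lra.
have tu : forall k n, t k <= u n.
  move=> k n; have e0 : forall m, 0 <= e m.
    by move=> m; rewrite /e divr_ge0 ?mulr_ge0 ?exprn_ge0 // ltW.
  case: (leqP k n) => kn.
    have := mono_nat tinc kn; rewrite /t /u; have := e0 n; lra.
  have := mono_nat udec (ltnW kn); rewrite /t /u; have := e0 k; lra.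
move=> n.
have ne : range t !=set0 by exists (t 0%N), 0%N.
have ub : forall m, ubound (range t) (u m) by move=> m _ [k _ <-]; exact: tu.
have hs : has_ubound (range t) by exists (u 0%N); exact: ub.
have l1 : t n <= slim s c th by apply: ub_le_sup => //; exists n.
have l2 : slim s c th <= u n by apply: ge_sup => //; exact: ub.
rewrite ler_norml; move: l1 l2; rewrite /t /u /e; lra.
Qed.

Lemma geo_lim (A B D : R) : (forall n, A <= B + D * (2^-1) ^+ n) -> A <= B.
Proof.
move=> H; rewrite leNgt; apply/negP => BA.
case: (lerP D 0) => D0; first by have := H 0%N; rewrite expr0 mulr1; lra.
have AB0 : 0 < A - B by rewrite subr_gt0.
have [N hN] : exists N : nat, D / (A - B) < N%:R.
  by exists (Num.bound (D / (A - B))); apply: archi_boundP; rewrite divr_ge0 // ltW.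
have h2 : (N%:R : R) < 2 ^+ N by rewrite -natrX ltr_nat ltn_expl.
have h3 : D * 2^-1 ^+ N < A - B.
  have p2 : 0 < (2 : R) ^+ N by rewrite exprn_gt0.
  rewrite exprVn ltr_pdivrMr //.
  have := lt_trans hN h2; rewrite ltr_pdivrMr //; lra.
have := H N; lra.
Qed.
End S.
Section Lip.
Variable R : realType.
Variables (X : Type) (d : X -> X -> R) (x0 : X).
Hypothesis hd : is_metric d.

Definition lipb (f : X -> R) (K : R) :=
  f x0 = 0 /\ forall x y, `|f x - f y| <= K * d x y.

Lemma d_ge0 x y : 0 <= d x y. Proof. by case: hd. Qed.
Lemma d_xx x : d x x = 0. Proof. by case: hd => _ h _ _; apply/h. Qed.
Lemma d_gt0 x y : x <> y -> 0 < d x y.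
Proof.
move=> nxy; rewrite lt_def d_ge0 andbT; apply/negP => /eqP h.
by case: hd => _ h2 _ _; apply: nxy; apply/h2.
Qed.

Lemma molD p (f g : X -> R) :
  molecule d p (fun x => f x + g x) = molecule d p f + molecule d p g.
Proof. rewrite /molecule /=; ring. Qed.
Lemma molB p (f g : X -> R) :
  molecule d p (fun x => f x - g x) = molecule d p f - molecule d p g.
Proof. rewrite /molecule /=; ring. Qed.
Lemma molZ p c (f : X -> R) :
  molecule d p (fun x => c * f x) = c * molecule d p f.
Proof. rewrite /molecule /=; ring. Qed.
Lemma normmol p (f : X -> R) :
  `|molecule d p f| = `|f p.1 - f p.2| / d p.1 p.2.
Proof. by rewrite /molecule normrM normfV (ger0_norm (d_ge0 _ _)). Qed.

Lemma lipb_le f K K' : K <= K' -> lipb f K -> lipb f K'.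
Proof.
move=> KK [h0 h]; split=> // x y; apply: le_trans (h x y) _.
by rewrite ler_wpM2r // d_ge0.
Qed.
Lemma lipbZ f K c : lipb f K -> lipb (fun x => c * f x) (`|c| * K).
Proof.
move=> [h0 h]; split; first by rewrite h0 mulr0.
by move=> x y; rewrite -mulrBr normrM -mulrA ler_wpM2l.
Qed.
Lemma lipbD f g K L : lipb f K -> lipb g L -> lipb (fun x => f x + g x) (K + L).
Proof.
move=> [f0 hf] [g0 hg]; split; first by rewrite f0 g0 addr0.
move=> x y; have -> : f x + g x - (f y + g y) = (f x - f y) + (g x - g y) by ring.
apply: le_trans (ler_normD _ _) _; rewrite mulrDl; exact: lerD.
Qed.
Lemma lipbB f g K L : lipb f K -> lipb g L -> lipb (fun x => f x - g x) (K + L).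
Proof.
move=> [f0 hf] [g0 hg]; split; first by rewrite f0 g0 subr0.
move=> x y; have -> : f x - g x - (f y - g y) = (f x - f y) - (g x - g y) by ring.
apply: le_trans (ler_normB _ _) _; rewrite mulrDl; exact: lerD.
Qed.
Lemma lipb_lip0 f K : lipb f K -> is_lip0 d x0 f.
Proof. by move=> [h0 h]; split=> //; exists K. Qed.

Lemma mol_ball p h : p.1 <> p.2 -> lip0_ball d x0 h -> `|molecule d p h| <= 1.
Proof. by move=> np [_ hb]; rewrite normmol; apply: hb. Qed.

Lemma rho_bound (p q : X * X) f K : p.1 <> p.2 -> q.1 <> q.2 -> 0 < K ->
  lipb f K -> `|molecule d p f - molecule d q f| <= rho d x0 p q * K.
Proof.
move=> np nq K0 hf.
pose g := fun x => K^-1 * f x.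
have gl : lipb g 1.
  apply: lipb_le (lipbZ K^-1 hf).
  have Ki : 0 <= K^-1 by rewrite invr_ge0 ltW.
  by rewrite (ger0_norm Ki) mulVf // gt_eqF.
have gb : lip0_ball d x0 g.
  split; first exact: lipb_lip0 gl.
  move=> x y nxy; rewrite ler_pdivrMr ?d_gt0 //; exact: gl.2.
have : `|molecule d p g - molecule d q g| <= rho d x0 p q.
  rewrite /rho; apply: ub_le_sup; last by exists g.
  exists 2 => r [h [hb ->]]; apply: le_trans (ler_normB _ _) _.
  have := mol_ball np hb; have := mol_ball nq hb; lra.
have Ki : 0 <= K^-1 by rewrite invr_ge0 ltW.
rewrite /g !molZ -mulrBr normrM (ger0_norm Ki).
set w := `|_ - _|; move=> h.
have -> : w = K * (K^-1 * w) by rewrite mulrA mulfV ?gt_eqF // mul1r.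
by rewrite [_ * K]mulrC ler_wpM2l // ltW.
Qed.

Fixpoint psum (f : nat -> X -> R) (n : nat) (x : X) : R :=
  if n is m.+1 then psum f m x + f m x else 0.

Lemma iterA (I : Type) (q : I -> X * X) (K : R) : 0 < K ->
  (forall s, 0 < s -> forall a : I -> R, (forall i, `|a i| <= s) ->
     exists f, lipb f (K * s) /\ forall i, `|a i - molecule d (q i) f| <= s / 2) ->
  forall s, 0 < s -> forall a : I -> R, (forall i, `|a i| <= s) ->
     exists F, lipb F (2 * K * s) /\ forall i, molecule d (q i) F = a i.
Proof.
move=> K0 H s s0 a ha.
have hex : forall sa : R * (I -> R), exists f : X -> R, 0 < sa.1 ->
    (forall i, `|sa.2 i| <= sa.1) ->
   lipb f (K * sa.1) /\
   forall i, `|sa.2 i - molecule d (q i) f| <= sa.1 / 2.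
  move=> -[s' a'] /=.
  case: (pselect (0 < s' /\ forall i, `|a' i| <= s')) => [[h1 h2]|hn].
    by have [f hf] := H s' h1 a' h2; exists f.
  by exists (fun _ => 0) => h1 h2; exfalso; apply: hn.
have [g gP] := choice hex.
pose th : R := 2^-1.
have th0 : 0 < th by rewrite invr_gt0.
have th1 : th < 1 by rewrite invf_lt1 // ltr1n.
have thh : 1 - th = th by rewrite /th; field.
pose sc n := s * th ^+ n.
pose res := fix res (n : nat) : I -> R := if n is m.+1 then
  (fun i => res m i - molecule d (q i) (g (sc m, res m))) else a.
pose fn n := g (sc n, res n).
have sc0 n : 0 < sc n by rewrite /sc mulr_gt0 // exprn_gt0.
have scS n : sc n.+1 = sc n / 2 by rewrite /sc exprSr /th mulrA.
have resP : forall n, (forall i, `|res n i| <= sc n) /\ lipb (fn n) (K * sc n).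
  elim=> [|n [IH _]].
    have hr : forall i, `|res 0%N i| <= sc 0%N by move=> i; rewrite /sc expr0 mulr1.
    by split=> //; exact: (gP (sc 0%N, res 0%N) (sc0 0%N) hr).1.
  have hr : forall i, `|res n.+1 i| <= sc n.+1.
    by move=> i /=; rewrite scS; exact: (gP (sc n, res n) (sc0 n) IH).2 i.
  by split => //; exact: (gP (sc n.+1, res n.+1) (sc0 _) hr).1.
have molP n i : molecule d (q i) (psum fn n) = a i - res n i.
  elim: n => [|n IH]; first by rewrite /molecule /= subrr mul0r subrr.
  have -> : molecule d (q i) (psum fn n.+1) =
            molecule d (q i) (psum fn n) + molecule d (q i) (fn n).
    by rewrite /molecule /=; ring.
  by rewrite IH /=; ring.
have ps0 n : psum fn n x0 = 0.
  by elim: n => [|n IH] //=; rewrite IH (resP n).2.1 addr0.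
have step x n : `|psum fn n.+1 x - psum fn n x| <= (K * s * d x x0) * th ^+ n.
  have -> : psum fn n.+1 x - psum fn n x = fn n x by rewrite /=; ring.
  have := (resP n).2.2 x x0; rewrite (resP n).2.1 subr0.
  by have -> : K * s * d x x0 * th ^+ n = K * sc n * d x x0 by rewrite /sc; ring.
have c0 x : 0 <= K * s * d x x0 by rewrite mulr_ge0 ?d_ge0 // mulr_ge0 // ltW.
pose F x := slim (fun n => psum fn n x) (K * s * d x x0) th.
have Fb x n : `|F x - psum fn n x| <= 2 * (K * s * d x x0) * th ^+ n.
  have := @slimP _ _ _ _ (c0 x) (introT andP (conj th0 th1)) (step x) n.
  rewrite thh; move/le_trans; apply; rewrite le_eqVlt; apply/orP; left; apply/eqP.
  rewrite /th invrK; ring.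
have psL n x y : `|psum fn n x - psum fn n y| <= 2 * K * s * (1 - th ^+ n) * d x y.
  elim: n => [|n IH]; first by rewrite /= subrr normr0 expr0 subrr !mulr0 mul0r.
  rewrite /=.
  have -> : psum fn n x + fn n x - (psum fn n y + fn n y) =
     (psum fn n x - psum fn n y) + (fn n x - fn n y) by ring.
  apply: le_trans (ler_normD _ _) _.
  have := (resP n).2.2 x y; rewrite /sc exprS.
  have : 0 <= K * s * d x y * th ^+ n by rewrite !mulr_ge0 ?d_ge0 ?exprn_ge0 ?ltW.
  move: IH; rewrite /th; lra.
exists F; split; last first.
  move=> i; apply/eqP; rewrite -subr_eq0 -normr_le0.
  set u1 := (q i).1; set u2 := (q i).2.
  pose E := 2 * (K * s * d u1 x0) + 2 * (K * s * d u2 x0).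
  apply: (@geo_lim _ _ 0 (E / d u1 u2 + s)) => n.
  have -> : molecule d (q i) F - a i =
    (molecule d (q i) F - molecule d (q i) (psum fn n)) - res n i.
    by rewrite molP; ring.
  apply: le_trans (ler_normB _ _) _.
  have r1 := (resP n).1 i; rewrite /sc in r1.
  have : `|molecule d (q i) F - molecule d (q i) (psum fn n)| <= E / d u1 u2 * th ^+ n.
    rewrite -molB normmol -/u1 -/u2 mulrAC ler_wpM2r ?invr_ge0 ?d_ge0 //.
    apply: le_trans (ler_normB _ _) _.
    have := Fb u1 n; have := Fb u2 n; rewrite /E; lra.
  rewrite /th; lra.
split.
  apply/eqP; rewrite -normr_le0; have := Fb x0 0%N.
  by rewrite d_xx ps0 subr0 !mulr0 mul0r.
move=> x y; apply: (@geo_lim _ _ _ (2 * (K * s * d x x0) + 2 * (K * s * d y x0))) => n.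
have := Fb x n; have := Fb y n; have := psL n x y.
have : 0 <= K * s * d x y * th ^+ n by rewrite !mulr_ge0 ?d_ge0 ?exprn_ge0 ?ltW.
have -> : F x - F y = (F x - psum fn n x) + (psum fn n x - psum fn n y) - (F y - psum fn n y) by ring.
have := ler_normD (F x - psum fn n x) (psum fn n x - psum fn n y).
have := ler_normB (F x - psum fn n x + (psum fn n x - psum fn n y)) (F y - psum fn n y).
rewrite /th; lra.
Qed.

Lemma baire (I : Type) (p : I -> X * X) : lip_interpolating d x0 p ->
  exists m : nat, exists r : R, 0 < r /\ forall z : I -> R, (forall i, `|z i| <= r) ->
    exists f, lipb f m%:R /\ forall i, `|z i - molecule d (p i) f| <= r / 2.
Proof.
move=> hT.
case: (pselect (exists m : nat, exists r : R, 0 < r /\ forall z : I -> R,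
   (forall i, `|z i| <= r) ->
    exists f, lipb f m%:R /\ forall i, `|z i - molecule d (p i) f| <= r / 2)) => // hn.
exfalso.
have step : forall (m : nat) (r : R) (y : I -> R), 0 < r -> exists z : I -> R,
    (forall i, `|z i - y i| <= r) /\ forall f, lipb f m%:R ->
      exists i, r / 2 < `|z i - molecule d (p i) f|.
  move=> m r y r0.
  case: (pselect (exists z : I -> R,
    (forall i, `|z i - y i| <= r) /\ forall f, lipb f m%:R ->
      exists i, r / 2 < `|z i - molecule d (p i) f|)) => // hz; exfalso.
  have hz' : forall z : I -> R, (forall i, `|z i - y i| <= r) -> exists f,
      lipb f m%:R /\ forall i, `|z i - molecule d (p i) f| <= r / 2.
    move=> z hzr.
    case: (pselect (exists f, lipb f m%:R /\
       forall i, `|z i - molecule d (p i) f| <= r / 2)) => // hf; exfalso.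
    apply: hz; exists z; split => // f hfl.
    case: (pselect (exists i, r / 2 < `|z i - molecule d (p i) f|)) => // hi; exfalso.
    apply: hf; exists f; split => // i; rewrite leNgt; apply/negP => hlt.
    by apply: hi; exists i.
  apply: hn; exists m, r; split => // w hw.
  have [f1 [l1 e1]] := hz' (fun i => y i + w i) ltac:(by move=> i /=; rewrite addrAC subrr add0r).
  have [f2 [l2 e2]] := hz' (fun i => y i - w i)
     ltac:(by move=> i /=; rewrite addrAC subrr add0r normrN).
  exists (fun x => 2^-1 * (f1 x - f2 x)); split.
    apply: lipb_le (lipbZ 2^-1 (lipbB l1 l2)).
    rewrite ger0_norm ?invr_ge0 ?ler0n // le_eqVlt; apply/orP; left; apply/eqP.
    by field.
  move=> i; rewrite molZ molB.
  have -> : w i - 2^-1 * (molecule d (p i) f1 - molecule d (p i) f2) =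
     2^-1 * ((y i + w i - molecule d (p i) f1) - (y i - w i - molecule d (p i) f2)).
    by field.
  rewrite normrM ger0_norm ?invr_ge0 ?ler0n //.
  have := ler_normB (y i + w i - molecule d (p i) f1) (y i - w i - molecule d (p i) f2).
  have := e1 i; have := e2 i; lra.
pose P := fun (t : nat * R * (I -> R)) (z : I -> R) => 0 < t.1.2 ->
    (forall i, `|z i - t.2 i| <= t.1.2) /\ forall f, lipb f (t.1.1)%:R ->
      exists i, t.1.2 / 2 < `|z i - molecule d (p i) f|.
have hex : forall t, exists z, P t z.
  move=> [[m r] y]; case: (ltrP 0 r) => r0.
    by have [z hz] := step m r y r0; exists z.
  by exists y => h; exfalso; move: h r0; rewrite /=; lra.
have [sf sfP] := choice hex.
pose th : R := 8^-1.
have th0 : 0 < th by rewrite invr_gt0.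
have th1 : th < 1 by rewrite invf_lt1 // ltr1n.
pose Y := fix Y (n : nat) : I -> R := if n is m.+1 then sf (m, th ^+ m, Y m)
  else (fun _ => 0).
have YP n : (forall i, `|Y n.+1 i - Y n i| <= th ^+ n) /\
   forall f, lipb f n%:R -> exists i, th ^+ n / 2 < `|Y n.+1 i - molecule d (p i) f|.
  exact: (sfP (n, th ^+ n, Y n) (exprn_gt0 _ th0)).
have st i n : `|Y n.+1 i - Y n i| <= 1 * th ^+ n by rewrite mul1r; exact: (YP n).1.
pose y i := slim (fun n => Y n i) 1 th.
have yb i n : `|y i - Y n i| <= 1 * th ^+ n / (1 - th).
  exact: (@slimP _ _ _ _ ler01 (introT andP (conj th0 th1)) (st i) n).
have [f [lf Tf]] : exists f, is_lip0 d x0 f /\ forall i, molecule d (p i) f = y i.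
  apply: hT; exists (1 / (1 - th)) => i; have := yb i 0%N.
  by rewrite /= subr0 expr0 mul1r.
case: lf => f0 [L hL].
have [N hN] : exists N : nat, `|L| < N%:R.
  by exists (Num.bound `|L|); apply: archi_boundP.
have lfN : lipb f N%:R.
  split => // a b; apply: le_trans (hL a b) _; rewrite ler_wpM2r ?d_ge0 //.
  exact: le_trans (ler_norm L) (ltW hN).
have [i hi] := (YP N).2 f lfN.
have := yb i N.+1; rewrite exprS.
have -> : 1 * (th * th ^+ N) / (1 - th) = th ^+ N / 7.
  by rewrite /th; field; rewrite ?pnatr_eq0 //.
have tp : 0 < th ^+ N by exact: exprn_gt0.
move: hi; rewrite Tf distrC; lra.
Qed.

Lemma main_sec (I : Type) (p : I -> X * X) :
  (forall i, (p i).1 <> (p i).2) ->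
  lip_interpolating d x0 p ->
  exists delta : R, 0 < delta /\
    forall q : I -> X * X,
      (forall i, (q i).1 <> (q i).2) ->
      (forall i, rho d x0 (p i) (q i) < delta) ->
      lip_interpolating d x0 q.
Proof.
move=> hp hT.
have [m [r [r0 hb]]] := baire hT.
pose K := (m%:R + 1) / r.
have K0 : 0 < K by rewrite /K divr_gt0 // ltr_wpDl.
have H : forall s, 0 < s -> forall a : I -> R, (forall i, `|a i| <= s) ->
     exists f, lipb f (K * s) /\ forall i, `|a i - molecule d (p i) f| <= s / 2.
  move=> s s0 a ha.
  have sr0 : 0 < s / r by rewrite divr_gt0.
  have rs0 : 0 < r / s by rewrite divr_gt0.
  have [f [lf ef]] := hb (fun i => r / s * a i)
    ltac:(by move=> i; rewrite normrM (gtr0_norm rs0); apply: le_trans (ler_wpM2l (ltW rs0) (ha i)) _; rewrite divfK ?gt_eqF).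
  exists (fun x => s / r * f x); split.
    apply: lipb_le (lipbZ (s / r) lf).
    rewrite (gtr0_norm sr0) /K (_ : (m%:R + 1) / r * s = s / r * (m%:R + 1)); last by ring.
    by apply: ler_wpM2l; [exact: ltW | lra].
  move=> i; rewrite molZ.
  have -> : a i - s / r * molecule d (p i) f =
     s / r * (r / s * a i - molecule d (p i) f).
    by field; rewrite ?gt_eqF.
  rewrite normrM (gtr0_norm sr0).
  apply: le_trans (ler_wpM2l (ltW sr0) (ef i)) _.
  rewrite le_eqVlt; apply/orP; left; apply/eqP; field; rewrite gt_eqF //.
have hC := iterA K0 H.
exists (4 * K)^-1; split; first by rewrite invr_gt0 mulr_gt0.
move=> q hq hrho.
have K20 : 0 < 2 * K by rewrite mulr_gt0.
have H' : forall s, 0 < s -> forall a : I -> R, (forall i, `|a i| <= s) ->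
     exists f, lipb f ((2 * K) * s) /\ forall i, `|a i - molecule d (q i) f| <= s / 2.
  move=> s s0 a ha.
  have [F [lF eF]] := hC s s0 a ha.
  exists F; split => // i.
  rewrite -eF.
  have pos : 0 < 2 * K * s by rewrite mulr_gt0.
  apply: le_trans (rho_bound (hp i) (hq i) pos lF) _.
  apply: le_trans (ler_wpM2r (ltW pos) (ltW (hrho i))) _.
  rewrite le_eqVlt; apply/orP; left; apply/eqP; field; rewrite gt_eqF //.
have hC' := iterA K20 H'.
move=> a [M hM].
have s0 : 0 < `|M| + 1 by rewrite ltr_wpDl.
have [F [lF eF]] := hC' (`|M| + 1) s0 a
  ltac:(by move=> i; apply: le_trans (hM i) _; apply: le_trans (ler_norm M) _; rewrite lerDl).
by exists F; split => //; exact: lipb_lip0 lF.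
Qed.
End Lip.

Unset Implicit Arguments. Set Strict Implicit.
Local Close Scope classical_set_scope.

Theorem proposition3p21 (R : realType) (X : Type) (d : X -> X -> R) (x0 : X)
  (I : Type) (p : I -> X * X) :
  is_metric d ->
  (forall i, (p i).1 <> (p i).2) ->
  lip_interpolating d x0 p ->
  exists delta : R, 0 < delta /\
    forall q : I -> X * X,
      (forall i, (q i).1 <> (q i).2) ->
      (forall i, rho d x0 (p i) (q i) < delta) ->
      lip_interpolating d x0 q.
Proof. by move=> hd; apply: main_sec. Qed.
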